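(* Let $X$ be a compact Hausdorff space and let $M$ be a self-conjugate function space on $X$. Then for any three pairwise distinct points $x,x',z\in Ch(M)$ there exists $h\in M$ such that $|h(x)|\neq|h(x')|$ and $h(z)=0$.
   Context: $C(X)$ denotes the space of continuous scalar-valued (real or complex) functions on $X$ with the supremum norm. A function space on $X$ is a linear subspace of $C(X)$ containing the constant function $1$ and separating the points of $X$; it is self-conjugate if $\bar f\in M$ whenever $f\in M$. For a linear subspace $A\subseteq C(X)$, its Choquet boundary $Ch(A)$ is the set of points $x\in X$ such that the evaluation functional $\delta_x:A\to$ scalars, $g\mapsto g(x)$, is an extreme point of the closed unit ball of the dual space of $(A,\|\cdot\|)$. *)

(* Defs.v *)
From Stdlib Require Import Reals List.
Open Scope R_scope.

Definition Cx : Type := (R * R)%type.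
Definition Cre (z : Cx) : R := fst z.
Definition Cim (z : Cx) : R := snd z.
Definition RtoC (r : R) : Cx := (r, 0).
Definition C0 : Cx := (0, 0).
Definition C1 : Cx := (1, 0).
Definition Cadd (z w : Cx) : Cx := (fst z + fst w, snd z + snd w).
Definition Copp (z : Cx) : Cx := (- fst z, - snd z).
Definition Csub (z w : Cx) : Cx := Cadd z (Copp w).
Definition Cmul (z w : Cx) : Cx :=
  (fst z * fst w - snd z * snd w, fst z * snd w + snd z * fst w).
Definition Cconj (z : Cx) : Cx := (fst z, - snd z).
Definition Cmod (z : Cx) : R := sqrt (fst z * fst z + snd z * snd z).

(* The scalar field: real case (cplx = false): reals, i.e. imaginary part 0;
   complex case (cplx = true): all of C. *)
Definition scalar (cplx : bool) (z : Cx) : Prop := cplx = true \/ snd z = 0.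

Definition is_topology {X : Type} (T : (X -> Prop) -> Prop) : Prop :=
  T (fun _ => True) /\ T (fun _ => False) /\
  (forall (I : Type) (U : I -> X -> Prop), (forall i, T (U i)) ->
      T (fun x => exists i, U i x)) /\
  (forall U V, T U -> T V -> T (fun x => U x /\ V x)).

Definition compact_space {X : Type} (T : (X -> Prop) -> Prop) : Prop :=
  forall (I : Type) (U : I -> X -> Prop),
    (forall i, T (U i)) -> (forall x, exists i, U i x) ->
    exists l : list I, forall x, exists i, In i l /\ U i x.

Definition hausdorff {X : Type} (T : (X -> Prop) -> Prop) : Prop :=
  forall x y : X, x <> y ->
    exists U V, T U /\ T V /\ U x /\ V y /\ (forall z, U z -> V z -> False).

Definition continuous {X : Type} (T : (X -> Prop) -> Prop) (f : X -> Cx) : Prop :=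
  forall x (eps : R), 0 < eps ->
    exists U, T U /\ U x /\ forall y, U y -> Cmod (Csub (f y) (f x)) < eps.

Definition in_CX (cplx : bool) {X : Type} (T : (X -> Prop) -> Prop) (f : X -> Cx) : Prop :=
  continuous T f /\ forall x, scalar cplx (f x).

Definition linear_subspace (cplx : bool) {X : Type} (T : (X -> Prop) -> Prop)
  (M : (X -> Cx) -> Prop) : Prop :=
  (forall f, M f -> in_CX cplx T f) /\
  M (fun _ => C0) /\
  (forall f g, M f -> M g -> M (fun x => Cadd (f x) (g x))) /\
  (forall a f, scalar cplx a -> M f -> M (fun x => Cmul a (f x))).

Definition function_space (cplx : bool) {X : Type} (T : (X -> Prop) -> Prop)
  (M : (X -> Cx) -> Prop) : Prop :=
  linear_subspace cplx T M /\
  M (fun _ => C1) /\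
  (forall x y : X, x <> y -> exists f, M f /\ f x <> f y).

Definition self_conjugate {X : Type} (M : (X -> Cx) -> Prop) : Prop :=
  forall f, M f -> M (fun x => Cconj (f x)).

(* phi is an element of the closed unit ball of the dual of (M, sup norm):
   a scalar-valued linear functional on M with |phi g| <= ||g||_sup.
   (The bound |phi g| <= c for every upper bound c of |g| on X is exactly
   |phi g| <= sup_X |g|.)  Functionals are only relevant on M. *)
Definition dual_ball (cplx : bool) {X : Type} (M : (X -> Cx) -> Prop)
  (phi : (X -> Cx) -> Cx) : Prop :=
  (forall g, M g -> scalar cplx (phi g)) /\
  (forall f g, M f -> M g -> phi (fun x => Cadd (f x) (g x)) = Cadd (phi f) (phi g)) /\
  (forall a f, scalar cplx a -> M f -> phi (fun x => Cmul a (f x)) = Cmul a (phi f)) /\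
  (forall g (c : R), M g -> (forall x, Cmod (g x) <= c) -> Cmod (phi g) <= c).

(* extreme point of the dual unit ball (equality of functionals = equality on M) *)
Definition dual_ball_extreme (cplx : bool) {X : Type} (M : (X -> Cx) -> Prop)
  (phi : (X -> Cx) -> Cx) : Prop :=
  dual_ball cplx M phi /\
  forall psi1 psi2 (t : R), dual_ball cplx M psi1 -> dual_ball cplx M psi2 ->
    0 < t < 1 ->
    (forall g, M g -> phi g = Cadd (Cmul (RtoC t) (psi1 g)) (Cmul (RtoC (1 - t)) (psi2 g))) ->
    forall g, M g -> psi1 g = psi2 g.

Definition eval_at {X : Type} (x : X) : (X -> Cx) -> Cx := fun g => g x.

Definition choquet_boundary (cplx : bool) {X : Type} (M : (X -> Cx) -> Prop) (x : X) : Prop :=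
  dual_ball_extreme cplx M (eval_at x).

(* Main.v *)
Require Import Defs.
From Stdlib Require Import Reals Lra Classical.
Open Scope R_scope.

Lemma snd_eq (cplx : bool) (X : Type) (T : (X -> Prop) -> Prop) (M : (X -> Cx) -> Prop)
  (HL : linear_subspace cplx T M) (p q r : X) (al be : R) :
  (forall g, M g -> fst (g r) = al * fst (g p) + be * fst (g q)) ->
  forall g, M g -> snd (g r) = al * snd (g p) + be * snd (g q).
Proof.
  intros H g Hg. destruct HL as [Hsub [H0 [Hadd Hscal]]].
  destruct cplx.
  - assert (Mg' : M (fun y => Cmul (0,-1) (g y))).
    { apply Hscal; [left; reflexivity | exact Hg]. }
    pose proof (H _ Mg') as E. unfold Cmul in E; simpl in E. lra.
  - assert (Z : forall y, snd (g y) = 0).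
    { intro y. destruct (proj2 (Hsub g Hg) y) as [D|D]; [discriminate|exact D]. }
    rewrite !Z; ring.
Qed.

Lemma full_eq (cplx : bool) (X : Type) (T : (X -> Prop) -> Prop) (M : (X -> Cx) -> Prop)
  (HL : linear_subspace cplx T M) (p q r : X) (al be : R) :
  (forall g, M g -> fst (g r) = al * fst (g p) + be * fst (g q)) ->
  forall g, M g -> g r = Cadd (Cmul (RtoC al) (g p)) (Cmul (RtoC be) (g q)).
Proof.
  intros H g Hg.
  pose proof (H g Hg) as E1. pose proof (snd_eq cplx X T M HL p q r al be H g Hg) as E2.
  rewrite (surjective_pairing (g r)). unfold Cadd, Cmul, RtoC; simpl.
  f_equal; lra.
Qed.

Lemma Cmod_real (a : R) : Cmod (a, 0) = Rabs a.
Proof.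
  unfold Cmod; simpl. replace (a * a + 0 * 0) with (Rsqr a) by (unfold Rsqr; ring).
  apply sqrt_Rsqr_abs.
Qed.

Theorem mainTheorem3 (cplx : bool) (X : Type) (T : (X -> Prop) -> Prop)
  (M : (X -> Cx) -> Prop) :
  @is_topology X T -> @compact_space X T -> @hausdorff X T ->
  function_space cplx T M -> self_conjugate M ->
  forall x x' z : X,
    choquet_boundary cplx M x -> choquet_boundary cplx M x' -> choquet_boundary cplx M z ->
    x <> x' -> x <> z -> x' <> z ->
    exists h, M h /\ Cmod (h x) <> Cmod (h x') /\ h z = C0.
Proof.
  intros _ _ _ HF Hconj x x' z _ _ Chz Hxx' _ _.
  destruct HF as [HL [H1 Hsep]].
  pose proof HL as HL'.
  destruct HL' as [Hsub [H0 [Hadd Hscal]]].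
  apply NNPP; intro Hne.
  assert (Hall : forall h, M h -> h z = C0 -> Cmod (h x) = Cmod (h x')).
  { intros h Mh hz. apply NNPP; intro D. apply Hne. exists h; auto. }
  set (A := fun g : X -> Cx => fst (g x) - fst (g z)).
  set (B := fun g : X -> Cx => fst (g x') - fst (g z)).
  assert (HAB : forall g, M g -> A g = B g \/ A g = - B g).
  { intros g Mg.
    set (rg := fun y => Cmul (RtoC (1/2)) (Cadd (g y) (Cconj (g y)))).
    assert (Mrg : M rg).
    { apply Hscal. right; reflexivity. apply Hadd; [exact Mg | apply Hconj; exact Mg]. }
    set (k := fun y => Cadd (rg y) (Cmul (RtoC (- fst (g z))) Defs.C1)).
    assert (Mk : M k).
    { apply Hadd; [exact Mrg|]. apply Hscal; [right; reflexivity | exact H1]. }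
    assert (Kv : forall y, k y = (fst (g y) - fst (g z), 0)).
    { intro y. unfold k, rg, Cadd, Cmul, Cconj, RtoC, Defs.C1; simpl. f_equal; field. }
    assert (kz : k z = C0).
    { rewrite Kv. unfold C0. f_equal; ring. }
    pose proof (Hall k Mk kz) as E. rewrite !Kv, !Cmod_real in E.
    unfold A, B. revert E. unfold Rabs; destruct Rcase_abs; destruct Rcase_abs; intros; lra. }
  assert (Hcase : (forall g, M g -> A g = B g) \/ (forall g, M g -> A g = - B g)).
  { apply NNPP; intro D. apply not_or_and in D. destruct D as [D1 D2].
    apply not_all_ex_not in D1. destruct D1 as [g1 D1].
    apply not_all_ex_not in D2. destruct D2 as [g2 D2].
    apply imply_to_and in D1. apply imply_to_and in D2.
    destruct D1 as [M1 N1]. destruct D2 as [M2 N2].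
    pose proof (HAB g1 M1). pose proof (HAB g2 M2).
    pose proof (HAB _ (Hadd g1 g2 M1 M2)) as S.
    unfold A, B, Cadd in S, H, H2, N1, N2; simpl in S. lra. }
  destruct Hcase as [Hc | Hc].
  - assert (E : forall g, M g -> g x' = Cadd (Cmul (RtoC 1) (g x)) (Cmul (RtoC 0) (g x))).
    { apply (full_eq cplx X T M HL x x x' 1 0).
      intros g Mg. pose proof (Hc g Mg) as E. unfold A, B in E. lra. }
    destruct (Hsep x x' Hxx') as [f [Mf Nf]]. apply Nf.
    rewrite (E f Mf). rewrite (surjective_pairing (f x)).
    unfold Cadd, Cmul, RtoC; simpl. f_equal; ring.
  - assert (E : forall g, M g -> g z = Cadd (Cmul (RtoC (1/2)) (g x)) (Cmul (RtoC (1 - 1/2)) (g x'))).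
    { apply (full_eq cplx X T M HL x x' z (1/2) (1 - 1/2)).
      intros g Mg. pose proof (Hc g Mg) as E. unfold A, B in E. lra. }
    assert (DB : forall y, dual_ball cplx M (eval_at y)).
    { intro y. unfold dual_ball, eval_at. split; [|split; [|split]].
      - intros g Mg. exact (proj2 (Hsub g Mg) y).
      - intros; reflexivity.
      - intros; reflexivity.
      - intros g c Mg Hc'. apply Hc'. }
    destruct Chz as [_ Ext].
    assert (Q := Ext (eval_at x) (eval_at x') (1/2) (DB x) (DB x')).
    destruct (Hsep x x' Hxx') as [f [Mf Nf]]. apply Nf.
    apply (Q ltac:(lra) E f Mf).
Qed.
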